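(* Let $\kappa$ be a cardinal. A liner $X$ is $\kappa$-ranked if and only if it has the $\kappa$-Exchange Property. In particular, a liner is ranked if and only if it has the Exchange Property.
   Context: A liner is a set $X$ of points with a family $\mathcal L$ of subsets called lines such that any two distinct points lie in a unique line and every line contains at least two points. For distinct $x,y$, $\overline{xy}$ is the line containing $x,y$; $\overline{xx}:=\{x\}$. A set $A\subseteq X$ is flat if $\overline{xy}\subseteq A$ for all distinct $x,y\in A$; the flat hull $\overline A$ is the smallest flat containing $A$. The rank $\|A\|$ of $A\subseteq X$ is the smallest cardinality $|B|$ of a set $B\subseteq X$ with $A\subseteq\overline B$. A liner is $\kappa$-ranked if any two flats $A\subseteq B\subseteq X$ of equal finite rank $\|A\|=\|B\|\le\kappa$ are equal; it is ranked if it is $\kappa$-ranked for every cardinal $\kappa$ (equivalently, any flats $A\subseteq B$ of equal finite rank coincide). A liner has the $\kappa$-Exchange Property if for every set $A\subseteq X$ with $|A|<\kappa$ and all points $x\in X$, $y\in\overline{A\cup\{x\}}\setminus\overline A$, we have $x\in\overline{A\cup\{y\}}$. It has the Exchange Property if for every flat $A$ and points $x\in X\setminus A$, $y\in\overline{A\cup\{x\}}\setminus A$, we have $x\in\overline{A\cup\{y\}}$. *)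

(* Defs.v *)
From Stdlib Require Import List Arith.

Set Implicit Arguments.

Section Liner.
Variable X : Type.
Variable L : (X -> Prop) -> Prop.

Definition is_liner : Prop :=
  (forall x y : X, x <> y ->
     exists l, L l /\ l x /\ l y /\
       forall l', L l' -> l' x -> l' y -> forall z, l' z <-> l z) /\
  (forall l, L l -> exists x y : X, x <> y /\ l x /\ l y).

Definition flat (A : X -> Prop) : Prop :=
  forall l, L l -> forall x y, x <> y -> l x -> l y -> A x -> A y ->
    forall z, l z -> A z.

Definition hull (A : X -> Prop) : X -> Prop :=
  fun z => forall F, flat F -> (forall a, A a -> F a) -> F z.

Definition subset (A B : X -> Prop) : Prop := forall x, A x -> B x.
Definition set_eq (A B : X -> Prop) : Prop := forall x, A x <-> B x.
Definition setU1 (A : X -> Prop) (x : X) : X -> Prop := fun z => A z \/ z = x.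

(* Finite sets B are represented by lists (duplicates only increase
   the length, so the minimum is the minimal cardinality). *)
Definition rank_eq (A : X -> Prop) (n : nat) : Prop :=
  (exists B : list X, length B = n /\ subset A (hull (fun z => In z B))) /\
  (forall B : list X, subset A (hull (fun z => In z B)) -> n <= length B).

(* Cardinals: a cardinal kappa is represented as the cardinality of a type K.
   |A| < kappa : there is an injection A -> K but no injection K -> A. *)
Definition card_lt (A : X -> Prop) (K : Type) : Prop :=
  (exists f : {x : X | A x} -> K, forall u v, f u = f v -> u = v) /\
  ~ (exists g : K -> {x : X | A x}, forall u v, g u = g v -> u = v).

End Liner.

Definition nat_le_card (n : nat) (K : Type) : Prop :=
  exists f : {i : nat | i < n} -> K, forall u v, f u = f v -> u = v.

Definition kappa_ranked (X : Type) (L : (X -> Prop) -> Prop) (K : Type) : Prop :=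
  forall (A B : X -> Prop) (n : nat),
    flat L A -> flat L B -> subset A B ->
    rank_eq L A n -> rank_eq L B n -> nat_le_card n K ->
    set_eq A B.

Definition ranked (X : Type) (L : (X -> Prop) -> Prop) : Prop :=
  forall (A B : X -> Prop) (n : nat),
    flat L A -> flat L B -> subset A B ->
    rank_eq L A n -> rank_eq L B n ->
    set_eq A B.

Definition kappa_exchange (X : Type) (L : (X -> Prop) -> Prop) (K : Type) : Prop :=
  forall (A : X -> Prop) (x y : X),
    card_lt A K ->
    hull L (setU1 A x) y -> ~ hull L A y ->
    hull L (setU1 A y) x.

Definition exchange (X : Type) (L : (X -> Prop) -> Prop) : Prop :=
  forall (A : X -> Prop) (x y : X),
    flat L A -> ~ A x ->
    hull L (setU1 A x) y -> ~ A y ->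
    hull L (setU1 A y) x.

(* Main.v *)
Require Import Defs.
From Stdlib Require Import List Arith Lia Classical ClassicalEpsilon.
Import ListNotations.

Lemma hull_incl {X} (L : (X->Prop)->Prop) (S : X -> Prop) : forall a, S a -> hull L S a.
Proof. intros a Ha F _ HF. apply HF, Ha. Qed.

Lemma hull_flat {X} (L : (X->Prop)->Prop) (S : X -> Prop) : flat L (hull L S).
Proof.
  intros l Hl x y Hxy Hlx Hly Hx Hy z Hz F HF HSF.
  exact (HF l Hl x y Hxy Hlx Hly (Hx F HF HSF) (Hy F HF HSF) z Hz).
Qed.

Lemma hull_min {X} (L : (X->Prop)->Prop) (S A : X -> Prop) :
  flat L A -> (forall a, S a -> A a) -> forall z, hull L S z -> A z.
Proof. intros HA HS z Hz. exact (Hz A HA HS). Qed.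

Lemma hull_sub {X} (L : (X->Prop)->Prop) (S T : X -> Prop) :
  (forall a, S a -> hull L T a) -> forall z, hull L S z -> hull L T z.
Proof. intros H. apply hull_min; [apply hull_flat | exact H]. Qed.

Lemma hull_mono {X} (L : (X->Prop)->Prop) (S T : X -> Prop) :
  (forall a, S a -> T a) -> forall z, hull L S z -> hull L T z.
Proof. intros H. apply hull_sub. intros a Ha. apply hull_incl, H, Ha. Qed.

Lemma hull_finitary {X} (L : (X->Prop)->Prop) (S : X -> Prop) z : hull L S z ->
  exists l : list X, (forall a, In a l -> S a) /\ hull L (fun w => In w l) z.
Proof.
  intros Hz.
  set (F := fun z => exists l : list X, (forall a, In a l -> S a) /\ hull L (fun w => In w l) z).
  apply (hull_min L S F); [| | exact Hz].
  - intros l0 Hl0 x y Hxy Hlx Hly [l1 [H1 Hx]] [l2 [H2 Hy]] w Hw.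
    exists (l1 ++ l2). split.
    + intros a Ha. apply in_app_or in Ha as [Ha|Ha]; auto.
    + apply (hull_flat L _ l0 Hl0 x y Hxy Hlx Hly).
      * revert Hx. apply hull_mono. intros a Ha. apply in_or_app; auto.
      * revert Hy. apply hull_mono. intros a Ha. apply in_or_app; auto.
      * exact Hw.
  - intros a Ha. exists [a]. split.
    + intros b [<-|[]]. exact Ha.
    + apply hull_incl. left; reflexivity.
Qed.

Lemma list_filter_prop {X} (Q : X -> Prop) (l : list X) :
  exists l', NoDup l' /\ forall z, In z l' <-> In z l /\ Q z.
Proof.
  induction l as [|a l IH].
  - exists []. split; [constructor|]. intros z; simpl; tauto.
  - destruct IH as [l' [Hnd Hl']].
    destruct (classic (Q a /\ ~ In a l')) as [[HQ Hn]|Hno].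
    + exists (a :: l'). split; [constructor; auto|].
      intros z; simpl; rewrite Hl'. split.
      * intros [<-|H]; tauto.
      * intros [[<-|H] HQz]; tauto.
    + exists l'. split; auto. intros z. rewrite Hl'; simpl. split; [tauto|].
      intros [[<-|H] HQz]; [|tauto].
      destruct (classic (In a l')) as [Hi|Hi].
      * apply (proj1 (Hl' a) Hi).
      * exfalso; apply Hno; tauto.
Qed.

Lemma nat_min (P : nat -> Prop) : (exists n, P n) -> exists n, P n /\ forall k, P k -> n <= k.
Proof.
  intros [n Hn]. revert Hn. induction n as [n IH] using lt_wf_ind. intros Hn.
  destruct (classic (exists k, P k /\ k < n)) as [[k [Hk Hlt]]|Hno].
  - exact (IH k Hlt Hk).
  - exists n. split; auto. intros k Hk. destruct (le_lt_dec n k); auto. exfalso; eauto.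
Qed.

Lemma nat_max (P : nat -> Prop) N : (exists n, P n) -> (forall k, P k -> k <= N) ->
  exists n, P n /\ forall k, P k -> k <= n.
Proof.
  intros Hex Hb.
  destruct (nat_min (fun m => exists n, P n /\ m = N - n)) as [m [[n [Hn ->]] Hmin]].
  - destruct Hex as [n Hn]. eauto.
  - exists n. split; auto. intros k Hk. specialize (Hmin (N - k) (ex_intro _ k (conj Hk eq_refl))).
    pose proof (Hb k Hk). pose proof (Hb n Hn). lia.
Qed.

Lemma rank_exists {X} (L : (X->Prop)->Prop) (S : X -> Prop) (B : list X) :
  (forall z, S z -> hull L (fun w => In w B) z) -> exists n, rank_eq L S n.
Proof.
  intros HB.
  destruct (nat_min (fun n => exists B, length B = n /\ subset S (hull L (fun z => In z B)))) as [n [Hn Hmin]].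
  - exists (length B). exists B. split; auto.
  - exists n. split; auto. intros B' HB'. apply Hmin. exists B'. auto.
Qed.

Lemma rank_mono {X} (L : (X->Prop)->Prop) (S T : X -> Prop) s t :
  subset S T -> rank_eq L S s -> rank_eq L T t -> s <= t.
Proof.
  intros HST [_ Hs] [[B [HB HTB]] _]. rewrite <- HB. apply Hs. intros z Hz. apply HTB, HST, Hz.
Qed.

Lemma core_fwd {X} (L : (X->Prop)->Prop) (Q : nat -> Prop) :
  (forall A B n, flat L A -> flat L B -> subset A B -> rank_eq L A n -> rank_eq L B n -> Q n -> set_eq A B) ->
  (forall n m, m <= n -> Q n -> Q m) ->
  forall (F : list X) x y, Q (S (length F)) ->
  hull L (fun z => In z F \/ z = x) y -> ~ hull L (fun z => In z F) y ->
  hull L (fun z => In z F \/ z = y) x.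
Proof.
  intros HR HQ F x y HQF Hy Hny.
  set (P := hull L (fun z => In z F)).
  set (Qs := hull L (fun z => In z F \/ z = x)).
  set (R := hull L (fun z => In z F \/ z = y)).
  destruct (rank_exists L P F (fun z Hz => Hz)) as [m Hm].
  destruct (rank_exists L Qs (F ++ [x])) as [q Hq].
  { apply hull_sub. intros a [Ha| ->]; apply hull_incl; apply in_or_app; [left|right; left]; auto. }
  destruct (rank_exists L R (F ++ [y])) as [r Hr].
  { apply hull_sub. intros a [Ha| ->]; apply hull_incl; apply in_or_app; [left|right; left]; auto. }
  assert (HPR : subset P R). { unfold P, R. intros z. apply hull_mono. intros a Ha; left; exact Ha. }
  assert (HRQ : subset R Qs).
  { intros z. apply hull_sub. intros a [Ha| ->]. apply hull_incl; left; auto. exact Hy. }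
  assert (Hmle : m <= length F). { destruct Hm as [_ Hm]. apply Hm. intros z Hz; exact Hz. }
  assert (Hqle : q <= S m).
  { destruct Hm as [[B [HB HPB]] _]. destruct Hq as [_ Hq].
    rewrite <- HB. replace (S (length B)) with (length (B ++ [x])) by (rewrite length_app; simpl; lia).
    apply Hq. intros z. apply hull_sub. intros a [Ha| ->].
    - apply (hull_mono L (fun z => In z B)). intros w Hw; apply in_or_app; left; auto.
      apply HPB. apply hull_incl. exact Ha.
    - apply hull_incl. apply in_or_app; right; left; auto. }
  assert (Hmr : m <= r) by (apply (rank_mono L P R); auto).
  assert (Hrq : r <= q) by (apply (rank_mono L R Qs); auto).
  assert (Hrm : r <> m).
  { intros Heq. subst r.
    assert (HE : set_eq P R).
    { apply (HR P R m); [apply hull_flat|apply hull_flat|exact HPR|exact Hm|exact Hr|].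
      apply (HQ (S (length F))); [lia|auto]. }
    apply Hny. apply (proj2 (HE y)). apply hull_incl. right; reflexivity. }
  assert (HE : set_eq R Qs).
  { assert (r = q) by lia. subst q.
    apply (HR R Qs r); [apply hull_flat|apply hull_flat|exact HRQ|exact Hr|exact Hq|].
    apply (HQ (S (length F))); [lia|auto]. }
  apply (proj2 (HE x)). apply hull_incl. right; reflexivity.
Qed.
Lemma sig_eq_irr {A} (P : A -> Prop) (u v : {x : A | P x}) : proj1_sig u = proj1_sig v -> u = v.
Proof. destruct u as [x px], v as [y py]; simpl; intros ->. f_equal. apply proof_irrelevance. Qed.

Lemma pigeon {X} n (l : list X) (f : {i : nat | i < n} -> X) :
  (forall u v, f u = f v -> u = v) -> (forall u, In (f u) l) -> n <= length l.
Proof.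
  intros Hf Hl. destruct n as [|n]; [lia|].
  set (d := f (exist _ 0 (Nat.lt_0_succ n))).
  set (F := fun i => match lt_dec i (S n) with left p => f (exist _ i p) | right _ => d end).
  replace (S n) with (length (map F (seq 0 (S n)))) by (rewrite length_map, length_seq; auto).
  apply NoDup_incl_length.
  - apply NoDup_map_NoDup_ForallPairs; [|apply seq_NoDup].
    intros a b Ha Hb. apply in_seq in Ha, Hb. unfold F.
    destruct (lt_dec a (S n)) as [pa|]; [|lia]. destruct (lt_dec b (S n)) as [pb|]; [|lia].
    intros He. apply Hf in He. exact (f_equal (@proj1_sig _ _) He).
  - intros z Hz. apply in_map_iff in Hz as [i [<- Hi]]. unfold F.
    destruct (lt_dec i (S n)); apply Hl.
Qed.

Lemma card_list {X K} (l : list X) n : nat_le_card n K -> length l < n -> card_lt (fun z => In z l) K.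
Proof.
  intros [g Hg] Hlen. split.
  - assert (Hex : forall u : {x : X | In x l}, exists i : {i : nat | i < n},
       proj1_sig i < length l /\ nth (proj1_sig i) l (proj1_sig u) = proj1_sig u).
    { intros [x Hx]. simpl. destruct (In_nth l x x Hx) as [i [Hi Hnth]].
      exists (exist _ i (Nat.lt_trans _ _ _ Hi Hlen)). simpl. auto. }
    exists (fun u => g (proj1_sig (constructive_indefinite_description _ (Hex u)))).
    intros u v Huv. apply Hg in Huv.
    destruct (constructive_indefinite_description _ (Hex u)) as [iu [Hiu Hu]].
    destruct (constructive_indefinite_description _ (Hex v)) as [iv [Hiv Hv]].
    simpl in Huv. subst iv. apply sig_eq_irr. rewrite <- Hu, <- Hv. apply nth_indep. exact Hiu.
  - intros [h Hh].
    assert (n <= length l).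
    { apply (pigeon n l (fun i => proj1_sig (h (g i)))).
      - intros u v Huv. apply Hg, Hh, sig_eq_irr, Huv.
      - intros u. exact (proj2_sig (h (g u))). }
    lia.
Qed.

Lemma nat_le_card_mono K n m : m <= n -> nat_le_card n K -> nat_le_card m K.
Proof.
  intros Hmn [g Hg].
  exists (fun i : {i : nat | i < m} => g (exist _ (proj1_sig i) (Nat.lt_le_trans _ _ _ (proj2_sig i) Hmn))).
  intros u v Huv. apply Hg in Huv. apply sig_eq_irr. exact (f_equal (@proj1_sig _ _) Huv).
Qed.

Lemma card_fin {X K} (A : X -> Prop) (F : list X) : card_lt A K -> NoDup F ->
  (forall a, In a F -> A a) -> nat_le_card (S (length F)) K.
Proof.
  intros [[fA HfA] Hno] HF HFA.
  destruct (classic (exists k : K, forall u : {x | A x}, In (proj1_sig u) F -> fA u <> k)) as [[k0 Hk0]|Hall].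
  - set (m := length F).
    assert (Hex : forall i : {i : nat | i < S m}, exists k : K,
      (proj1_sig i < m -> exists u : {x | A x}, nth_error F (proj1_sig i) = Some (proj1_sig u) /\ k = fA u)
      /\ (proj1_sig i = m -> k = k0)).
    { intros [i Hi]. simpl. destruct (lt_dec i m) as [Him|Him].
      - destruct (nth_error F i) as [x|] eqn:Ex.
        + assert (Hx : A x) by (apply HFA; eapply nth_error_In; eauto).
          exists (fA (exist _ x Hx)). split; [|lia]. intros _. exists (exist _ x Hx). auto.
        + exfalso. apply (proj2 (nth_error_Some F i)); auto.
      - exists k0. split; [lia|auto]. }
    exists (fun i => proj1_sig (constructive_indefinite_description _ (Hex i))).
    intros u v Huv.
    destruct (constructive_indefinite_description _ (Hex u)) as [ku [Hu1 Hu2]].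
    destruct (constructive_indefinite_description _ (Hex v)) as [kv [Hv1 Hv2]].
    simpl in Huv. subst kv. apply sig_eq_irr.
    destruct u as [i Hi], v as [j Hj]. simpl in *.
    destruct (lt_dec i m) as [Him|Him]; destruct (lt_dec j m) as [Hjm|Hjm].
    + destruct (Hu1 Him) as [a [Ha ->]]. destruct (Hv1 Hjm) as [b [Hb He]].
      apply HfA in He. subst b. rewrite <- Hb in Ha.
      apply (proj1 (NoDup_nth_error F) HF); auto.
    + destruct (Hu1 Him) as [a [Ha ->]]. exfalso. apply (Hk0 a); [|apply Hv2; lia].
      eapply nth_error_In; eauto.
    + destruct (Hv1 Hjm) as [a [Ha He]]. exfalso. apply (Hk0 a); [|rewrite <- He; apply Hu2; lia].
      eapply nth_error_In; eauto.
    + lia.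
  - exfalso. apply Hno.
    assert (Hk : forall k : K, exists u : {x | A x}, fA u = k).
    { intros k. apply NNPP. intros Hn. apply Hall. exists k. intros u _ Hu. apply Hn. eauto. }
    exists (fun k => proj1_sig (constructive_indefinite_description _ (Hk k))).
    intros k1 k2 He.
    destruct (constructive_indefinite_description _ (Hk k1)) as [u1 H1].
    destruct (constructive_indefinite_description _ (Hk k2)) as [u2 H2].
    simpl in He. subst. reflexivity.
Qed.
Fixpoint indepR {X} (L : (X->Prop)->Prop) (E : list X) (D : list X) : Prop :=
  match D with
  | [] => True
  | d :: D' => ~ hull L (fun z => In z E) d /\ indepR L (d :: E) D'
  end.

Lemma indep_snoc {X} (L : (X->Prop)->Prop) (D E : list X) a :
  indepR L E D -> ~ hull L (fun z => In z (E ++ D)) a -> indepR L E (D ++ [a]).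
Proof.
  revert E. induction D as [|d D IH]; intros E HI Ha; simpl in *.
  - rewrite app_nil_r in Ha. auto.
  - destruct HI as [Hd HI]. split; auto. apply IH; auto. intros Hh. apply Ha. revert Hh. apply hull_mono.
    intros z Hz. simpl in Hz. apply in_or_app. destruct Hz as [<-|Hz]; [right; left; auto|].
    apply in_app_or in Hz. simpl; tauto.
Qed.

Lemma split_first {X} (L : (X->Prop)->Prop) (E C : list X) d :
  hull L (fun z => In z (E ++ C)) d -> ~ hull L (fun z => In z E) d ->
  exists C1 c C2, C = C1 ++ c :: C2 /\ ~ hull L (fun z => In z (E ++ C1)) d /\
    hull L (fun z => In z (E ++ C1) \/ z = c) d.
Proof.
  revert E. induction C as [|c C IH]; intros E H1 H2.
  - rewrite app_nil_r in H1. contradiction.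
  - destruct (classic (hull L (fun z => In z E \/ z = c) d)) as [Hc|Hc].
    + exists [], c, C. rewrite app_nil_r. auto.
    + destruct (IH (E ++ [c])) as [C1 [c' [C2 [-> [Ha Hb]]]]].
      * rewrite <- app_assoc. exact H1.
      * intros Hd. apply Hc. revert Hd. apply hull_mono. intros a Ha. apply in_app_or in Ha as [Ha|[<-|[]]]; [left; auto|right; auto].
      * exists (c :: C1), c', C2. rewrite <- app_assoc in Ha, Hb. simpl in Ha, Hb. auto.
Qed.

Lemma steinitz {X} (L : (X->Prop)->Prop) n
  (Ex : forall (l : list X) x y, length l < n ->
     hull L (fun z => In z l \/ z = x) y -> ~ hull L (fun z => In z l) y ->
     hull L (fun z => In z l \/ z = y) x) :
  forall D E C, indepR L E D -> (forall d, In d D -> hull L (fun z => In z (E ++ C)) d) ->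
    length E + length C <= n -> length D <= length C.
Proof.
  induction D as [|d D IH]; intros E C HI HD Hlen; simpl; [lia|].
  destruct HI as [Hd HI].
  destruct (split_first L E C d (HD d (or_introl eq_refl)) Hd) as [C1 [c [C2 [-> [Hn Hc]]]]].
  assert (Hx : hull L (fun z => In z (E ++ C1) \/ z = d) c).
  { apply Ex; auto. rewrite !length_app in *; simpl in *; lia. }
  assert (HLe : length D <= length (C1 ++ C2)).
  { apply (IH (d :: E)); auto.
    - intros d' Hd'. apply (hull_sub L (fun z => In z (E ++ C1 ++ c :: C2))).
      + intros a Ha. apply in_app_or in Ha as [Ha|Ha].
        { apply hull_incl; simpl; right; apply in_or_app; left; auto. }
        apply in_app_or in Ha as [Ha|[<-|Ha]].
        * apply hull_incl. simpl. right. apply in_or_app; right; apply in_or_app; left; auto.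
        * revert Hx. apply hull_mono. intros w [Hw| ->]; simpl; [right|left; auto].
          apply in_app_or in Hw as [Hw|Hw]; apply in_or_app; [left; auto| right; apply in_or_app; left; auto].
        * apply hull_incl. simpl. right. apply in_or_app; right; apply in_or_app; right; auto.
      + apply HD. right; auto.
    - simpl. rewrite !length_app in *. simpl in *. lia. }
  rewrite length_app in *. simpl. lia.
Qed.

Lemma core_bwd {X} (L : (X->Prop)->Prop) n
  (Ex : forall (l : list X) x y, length l < n ->
     hull L (fun z => In z l \/ z = x) y -> ~ hull L (fun z => In z l) y ->
     hull L (fun z => In z l \/ z = y) x) :
  forall A B, flat L A -> flat L B -> subset A B -> rank_eq L A n -> rank_eq L B n -> set_eq A B.
Proof.
  intros A B HA HB HAB HrA HrB.
  destruct HrB as [[C [HC HBC]] _].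
  assert (Hst : forall D, indepR L [] D -> (forall d, In d D -> B d) -> length D <= n).
  { intros D HI HD. rewrite <- HC. apply (steinitz L n Ex D [] C HI); [|simpl; lia].
    intros d Hd. simpl. apply HBC, HD, Hd. }
  destruct (nat_max (fun k => exists D, indepR L [] D /\ (forall d, In d D -> A d) /\ length D = k) n)
    as [k [[D [HI [HDA HDk]]] Hmax]].
  - exists 0, []. simpl. split; auto. split; auto. intros d [].
  - intros k [D [HI [HDA <-]]]. apply Hst; auto.
  - assert (HAD : forall a, A a -> hull L (fun z => In z D) a).
    { intros a Ha. apply NNPP. intros Hna.
      assert (H : length (D ++ [a]) <= k).
      { apply Hmax. exists (D ++ [a]). split; [apply indep_snoc; auto|split; [|auto]].
        intros d Hd; apply in_app_or in Hd as [Hd|[<-|[]]]; auto. }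
      rewrite length_app in H; simpl in H; lia. }
    assert (Hn : n <= k). { destruct HrA as [_ HrA]. rewrite <- HDk. apply HrA. exact HAD. }
    intros b. split; [apply HAB|]. intros Hb. apply NNPP. intros Hnb.
    assert (H : length (D ++ [b]) <= n).
    { apply Hst. apply indep_snoc; auto. intro Hh. apply Hnb. exact (hull_min L _ A HA HDA b Hh).
      intros d Hd; apply in_app_or in Hd as [Hd|[<-|[]]]; auto. }
    rewrite length_app in H; simpl in H; lia.
Qed.

Lemma reduce_fin {X} (L : (X->Prop)->Prop) (A : X -> Prop) x y :
  hull L (setU1 A x) y -> exists F, NoDup F /\ (forall a, In a F -> A a) /\
    hull L (fun z => In z F \/ z = x) y.
Proof.
  intros Hy. destruct (hull_finitary L _ y Hy) as [l [Hl Hyl]].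
  destruct (list_filter_prop A l) as [F [HF HFl]].
  exists F. split; auto. split.
  - intros a Ha. apply HFl, Ha.
  - revert Hyl. apply hull_mono. intros a Ha. destruct (Hl a Ha) as [HAa| ->]; [left|right; auto].
    apply HFl. auto.
Qed.

Theorem theorem2p3p5 (X : Type) (L : (X -> Prop) -> Prop) (HL : is_liner L)
  (K : Type) :
  (kappa_ranked L K <-> kappa_exchange L K) /\ (ranked L <-> exchange L).
Proof.
  split; split.
  - intros HR A x y HA Hy Hny.
    destruct (reduce_fin L A x y Hy) as [F [HF [HFA HyF]]].
    apply (hull_mono L (fun z => In z F \/ z = y)).
    { intros a [Ha| ->]; [left; auto|right; reflexivity]. }
    apply (core_fwd L (fun n => nat_le_card n K)); auto.
    + intros n m Hmn. apply nat_le_card_mono; auto.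
    + apply (card_fin A F); auto.
    + intros Hh. apply Hny. revert Hh. apply hull_mono. auto.
  - intros HE A B n HA HB HAB HrA HrB Hn. apply (core_bwd L n); auto.
    intros l x y Hlen Hy Hny. apply HE; auto. apply (card_list l n); auto.
  - intros HR A x y HA Hx Hy HnAy.
    destruct (reduce_fin L A x y Hy) as [F [HF [HFA HyF]]].
    apply (hull_mono L (fun z => In z F \/ z = y)).
    { intros a [Ha| ->]; [left; auto|right; reflexivity]. }
    apply (core_fwd L (fun _ => True)); auto.
    + intros A0 B0 n H1 H2 H3 H4 H5 _. apply (HR A0 B0 n); auto.
    + intros Hh. apply HnAy. exact (hull_min L _ A HA HFA y Hh).
  - intros HE A B n HA HB HAB HrA HrB. apply (core_bwd L n); auto.
    intros l x y _ Hy Hny.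
    assert (Hnx : ~ hull L (fun z => In z l) x).
    { intros Hx. apply Hny. revert Hy. apply hull_sub. intros a [Ha| ->]; [apply hull_incl; auto|exact Hx]. }
    assert (H := HE (hull L (fun z => In z l)) x y (hull_flat L _) Hnx).
    revert H. intros H.
    assert (H2 : hull L (setU1 (hull L (fun z => In z l)) y) x).
    { apply H; auto. revert Hy. apply hull_mono. intros a [Ha| ->]; [left; apply hull_incl; auto|right; auto]. }
    revert H2. apply hull_sub. intros a [Ha| ->].
    + revert Ha. apply hull_mono. intros w Hw; left; auto.
    + apply hull_incl. right; auto.
Qed.
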